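(* Let $\mathfrak{g}_\alpha$, $-1\le\alpha\le1$, be the eight-dimensional real Lie algebras with basis $\{X_1,\dots,X_8\}$ and nonzero brackets $[X_1,X_2]=2X_2$, $[X_1,X_3]=-2X_3$, $[X_2,X_3]=X_1$, $[X_1,X_4]=X_4$, $[X_1,X_5]=-X_5$, $[X_1,X_6]=X_6$, $[X_1,X_7]=-X_7$, $[X_2,X_5]=X_4$, $[X_2,X_7]=X_6$, $[X_3,X_4]=X_5$, $[X_3,X_6]=X_7$, $[X_4,X_8]=X_4$, $[X_5,X_8]=X_5$, $[X_6,X_8]=\alpha X_6$, $[X_7,X_8]=\alpha X_7$. For every $-1<\alpha\le1$, the Lie algebra $\mathfrak{g}_{-1}$ is a linear deformation of $\mathfrak{g}_\alpha$. Moreover this deformation generates two non-constant invariants for the coadjoint representation, i.e. $\mathcal{N}(\mathfrak{g}_\alpha)=0$ while $\mathcal{N}(\mathfrak{g}_{-1})=2$.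
   Context: A linear deformation of a Lie algebra $\mathfrak{g}$ with bracket $[\cdot,\cdot]$ is a Lie algebra structure on the same vector space of the form $[X,Y]_t=[X,Y]+t\,\varphi(X,Y)$, with $t$ a scalar and $\varphi$ a skew-symmetric bilinear map (an integrable 2-cocycle with values in the adjoint module) such that $[\cdot,\cdot]_t$ satisfies the Jacobi identity. For a Lie algebra $\mathfrak{g}$ with basis $\{X_1,\dots,X_n\}$, structure constants $[X_i,X_j]=C_{ij}^kX_k$ and dual coordinates $x_1,\dots,x_n$, the number of functionally independent invariants of the coadjoint representation (solutions $F$ of the system $C_{ij}^k x_k\,\partial F/\partial x_j=0$, $1\le i\le n$) is $\mathcal{N}(\mathfrak{g})=\dim\mathfrak{g}-\operatorname{rank}(C_{ij}^kx_k)$, the rank being the generic rank of the antisymmetric matrix with entries $C_{ij}^kx_k$. *)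

(* Defs.v *)
From HB Require Import structures.
From mathcomp Require Import all_boot all_order all_algebra.
From mathcomp Require Import reals.
Set Implicit Arguments. Unset Strict Implicit. Unset Printing Implicit Defensive.
Import Order.TTheory GRing.Theory Num.Theory.
Local Open Scope ring_scope.

(* A bilinear map on R^n (row vectors 'rV[R]_n, basis e_k = delta_mx 0 k) is
   given by its structure constants C i j k = coefficient of X_k in [X_i, X_j]. *)
Definition bracket {R : nzRingType} {n : nat} (C : 'I_n -> 'I_n -> 'I_n -> R)
  (u v : 'rV[R]_n) : 'rV[R]_n :=
  \row_k \sum_(i < n) \sum_(j < n) u 0 i * v 0 j * C i j k.

Definition skew_bilinear {R : nzRingType} {n : nat} (C : 'I_n -> 'I_n -> 'I_n -> R) :=
  forall u v : 'rV[R]_n, bracket C u v = - bracket C v u.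

Definition is_Lie {R : nzRingType} {n : nat} (C : 'I_n -> 'I_n -> 'I_n -> R) :=
  skew_bilinear C /\
  forall u v w : 'rV[R]_n,
    bracket C u (bracket C v w) + bracket C v (bracket C w u)
      + bracket C w (bracket C u v) = 0.

Definition deform {R : nzRingType} {n : nat} (C phi : 'I_n -> 'I_n -> 'I_n -> R) (t : R) :=
  fun i j k => C i j k + t * phi i j k.

Definition is_linear_deformation {R : nzRingType} {n : nat}
  (C D : 'I_n -> 'I_n -> 'I_n -> R) :=
  exists (phi : 'I_n -> 'I_n -> 'I_n -> R) (t0 : R),
    skew_bilinear phi /\ (forall t : R, is_Lie (deform C phi t)) /\
    (forall i j k, D i j k = deform C phi t0 i j k).

Definition coadj_matrix {R : nzRingType} {n : nat} (C : 'I_n -> 'I_n -> 'I_n -> R)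
  (x : 'rV[R]_n) : 'M[R]_n :=
  \matrix_(i, j) \sum_(k < n) C i j k * x 0 k.

(* N(g) = N : dim g - generic rank of (C_ij^k x_k), the generic rank being the
   maximal rank over all points x. *)
Definition num_invariants {R : fieldType} {n : nat} (C : 'I_n -> 'I_n -> 'I_n -> R)
  (N : nat) : Prop :=
  (N <= n)%N /\
  (exists x : 'rV[R]_n, \rank (coadj_matrix C x) = (n - N)%N) /\
  (forall x : 'rV[R]_n, (\rank (coadj_matrix C x) <= n - N)%N).

(* Upper-triangular structure constants of g_alpha (0-based indices: X_1 = 0). *)
Definition g_up {R : nzRingType} (alpha : R) (i j k : nat) : R :=
  match i, j, k with
  | 0%N, 1%N, 1%N => 2%:R
  | 0%N, 2%N, 2%N => - 2%:R
  | 1%N, 2%N, 0%N => 1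
  | 0%N, 3%N, 3%N => 1
  | 0%N, 4%N, 4%N => - 1
  | 0%N, 5%N, 5%N => 1
  | 0%N, 6%N, 6%N => - 1
  | 1%N, 4%N, 3%N => 1
  | 1%N, 6%N, 5%N => 1
  | 2%N, 3%N, 4%N => 1
  | 2%N, 5%N, 6%N => 1
  | 3%N, 7%N, 3%N => 1
  | 4%N, 7%N, 4%N => 1
  | 5%N, 7%N, 5%N => alpha
  | 6%N, 7%N, 6%N => alpha
  | _, _, _ => 0
  end.

Definition gC {R : nzRingType} (alpha : R) (i j k : 'I_8) : R :=
  if (i < j)%N then g_up alpha i j k
  else if (j < i)%N then - g_up alpha j i k else 0.

(* Main.v *)
Require Import Defs.
From HB Require Import structures.
From mathcomp Require Import all_boot all_order all_algebra.
From mathcomp Require Import reals.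
From mathcomp Require Import ring lra zify.
Import Order.TTheory GRing.Theory Num.Theory.
Local Open Scope ring_scope.

Definition gN (a : int) (i j k : nat) : int :=
  if (i < j)%N then g_up a i j k else if (j < i)%N then - g_up a j i k else 0.
Definition Ai i j k := gN 0 i j k.
Definition Bi i j k := gN 1 i j k - gN 0 i j k.
Definition P0 (i j k l m : nat) := Ai j k m * Ai i m l + Ai k i m * Ai j m l + Ai i j m * Ai k m l.
Definition P1 (i j k l m : nat) :=
  Ai j k m * Bi i m l + Bi j k m * Ai i m l + (Ai k i m * Bi j m l + Bi k i m * Ai j m l)
  + (Ai i j m * Bi k m l + Bi i j m * Ai k m l).
Definition P2 (i j k l m : nat) := Bi j k m * Bi i m l + Bi k i m * Bi j m l + Bi i j m * Bi k m l.
Definition sumz (f : nat -> int) := foldr (fun m acc => f m + acc) 0 (iota 0 8).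

Lemma g_up_lin (R : nzRingType) (b : R) (i j k : nat) :
  g_up b i j k = (g_up (0:int) i j k)%:~R + b * (g_up (1:int) i j k - g_up (0:int) i j k)%:~R.
Proof.
case: i => [|[|[|[|[|[|[|i]]]]]]]; case: j => [|[|[|[|[|[|[|[|j]]]]]]]];
case: k => [|[|[|[|[|[|[|k]]]]]]]; rewrite /g_up ?subrr ?mulr0 ?addr0 ?subr0 ?mul1r //=.
all: by rewrite /intmul /= add0r mulr1.
Qed.

Lemma gC_lin (R : comNzRingType) (b : R) (i j k : 'I_8) :
  gC b i j k = (Ai i j k)%:~R + b * (Bi i j k)%:~R.
Proof.
rewrite /gC /Ai /Bi /gN; case: ifP => _; first exact: g_up_lin.
case: ifP => _; last by rewrite subrr mulr0 addr0.
rewrite g_up_lin !intrN !intrB; ring.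
Qed.

Lemma sumz_intr (R : nzRingType) (f : nat -> int) :
  \sum_(m < 8) (f m)%:~R = (sumz f)%:~R :> R.
Proof.
rewrite -(big_mkord xpredT (fun m => (f m)%:~R)) /index_iota /= !big_cons big_nil /sumz /=.
by rewrite !intrD.
Qed.

Section Gen.
Variable R : comNzRingType.
Variable n : nat.
Implicit Types C : 'I_n -> 'I_n -> 'I_n -> R.

Lemma skew_of C : (forall i j k, C i j k = - C j i k) -> skew_bilinear C.
Proof.
move=> H u v; apply/rowP => k; rewrite !mxE exchange_big -sumrN.
apply: eq_bigr => i _; rewrite -sumrN; apply: eq_bigr => j _.
rewrite H; ring.
Qed.

Definition T C (a b c : 'rV[R]_n) l :=
  \sum_i \sum_j \sum_k a 0 i * b 0 j * c 0 k * (\sum_m C j k m * C i m l).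

Lemma brbr C a b c l : bracket C a (bracket C b c) 0 l = T C a b c l.
Proof.
rewrite /T mxE; apply: eq_bigr => i _.
under eq_bigr do rewrite mxE mulr_sumr mulr_suml.
rewrite exchange_big; apply: eq_bigr => j _.
under eq_bigr do rewrite mulr_sumr mulr_suml.
rewrite exchange_big; apply: eq_bigr => k _.
rewrite mulr_sumr; apply: eq_bigr => m _; ring.
Qed.

Lemma rot3 (F : 'I_n -> 'I_n -> 'I_n -> R) :
  \sum_a \sum_b \sum_c F a b c = \sum_c \sum_a \sum_b F a b c.
Proof. under eq_bigr do rewrite exchange_big. exact: exchange_big. Qed.

Lemma lie_of C : (forall i j k, C i j k = - C j i k) ->
  (forall i j k l, \sum_m (C j k m * C i m l + C k i m * C j m l + C i j m * C k m l) = 0) ->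
  is_Lie C.
Proof.
move=> Hs HJ; split; first exact: skew_of.
move=> u v w; apply/rowP => l.
have E (A B : 'rV[R]_n) : (A + B) 0 l = A 0 l + B 0 l by rewrite mxE.
rewrite !E !brbr /T [X in _ + X + _]rot3 [X in _ + X]rot3 [X in _ + X]rot3 mxE.
rewrite -!big_split /=; apply: big1 => i _.
rewrite -!big_split /=; apply: big1 => j _.
rewrite -!big_split /=; apply: big1 => k _.
have -> : u 0 i * v 0 j * w 0 k * \sum_(m < n) C j k m * C i m l +
  v 0 j * w 0 k * u 0 i * \sum_(m < n) C k i m * C j m l +
  w 0 k * u 0 i * v 0 j * \sum_(m < n) C i j m * C k m l =
  u 0 i * v 0 j * w 0 k * \sum_m (C j k m * C i m l + C k i m * C j m l + C i j m * C k m l).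
  by rewrite !big_split /=; ring.
by rewrite HJ mulr0.
Qed.
End Gen.

Definition check := all (fun i => all (fun j => all (fun k => all (fun l =>
  [&& sumz (P0 i j k l) == 0, sumz (P1 i j k l) == 0 & sumz (P2 i j k l) == 0])
  (iota 0 8)) (iota 0 8)) (iota 0 8)) (iota 0 8).
Lemma check_ok : check. Proof. vm_compute. reflexivity. Qed.

Lemma gC_skew (R : nzRingType) (b : R) (i j k : 'I_8) : gC b i j k = - gC b j i k.
Proof.
rewrite /gC; case: (ltngtP i j) => h; rewrite ?opprK ?oppr0 //.
Qed.

Lemma gC_jac (R : comNzRingType) (b : R) (i j k l : 'I_8) :
  \sum_m (gC b j k m * gC b i m l + gC b k i m * gC b j m l + gC b i j m * gC b k m l) = 0.
Proof.
have mem (p : 'I_8) : (nat_of_ord p \in iota 0 8) by rewrite mem_iota ltn_ord.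
have := check_ok; rewrite /check => /allP/(_ i (mem i))/allP/(_ j (mem j)).
move=> /allP/(_ k (mem k))/allP/(_ l (mem l))/and3P[/eqP h0 /eqP h1 /eqP h2].
transitivity (\sum_(m < 8) ((P0 i j k l m)%:~R + b * (P1 i j k l m)%:~R + b ^+ 2 * (P2 i j k l m)%:~R) : R).
  apply: eq_bigr => m _; rewrite !gC_lin /P0 /P1 /P2 /Ai /Bi !(intrD, intrM, intrN); ring.
rewrite !big_split /= -!mulr_sumr !sumz_intr h0 h1 h2; ring.
Qed.

Lemma gC_Lie (R : comNzRingType) (b : R) (C : 'I_8 -> 'I_8 -> 'I_8 -> R) :
  (forall i j k, C i j k = gC b i j k) -> is_Lie C.
Proof.
move=> HC; apply: lie_of.
  by move=> i j k; rewrite !HC gC_skew.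
move=> i j k l; etransitivity; last exact: (gC_jac _ b i j k l).
by apply: eq_bigr => m _; rewrite !HC.
Qed.


Definition gR {R : nzRingType} (a : R) (i j k : nat) : R :=
  if (i < j)%N then g_up a i j k else if (j < i)%N then - g_up a j i k else 0.
Definition Mx {R : nzRingType} (a : R) (xs : nat -> R) : 'M[R]_8 :=
  \matrix_(i, j) \sum_(k < 8) gR a i j k * xs k.

Lemma coadjE (R : nzRingType) (a : R) (x : 'rV[R]_8) (xs : nat -> R) : (forall k : 'I_8, x 0 k = xs k) ->
  coadj_matrix (gC a) x = Mx a xs.
Proof. by move=> H; apply/matrixP => i j; rewrite !mxE; apply: eq_bigr => k _; rewrite H. Qed.

Notation o k := (@Ordinal 8 k isT).

Lemma sum8 (R : nzRingType) (F : 'I_8 -> R) :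
  \sum_(k < 8) F k = F (o 0) + F (o 1) + F (o 2) + F (o 3) + F (o 4) + F (o 5) + F (o 6) + F (o 7).
Proof.
rewrite !big_ord_recl big_ord0 addr0 !addrA.
by repeat f_equal; apply: val_inj.
Qed.

Lemma rank_mxsub (F : fieldType) m n m' n' (f : 'I_m' -> 'I_m) (g : 'I_n' -> 'I_n) (A : 'M[F]_(m, n)) :
  (\rank (mxsub f g A) <= \rank A)%N.
Proof.
have -> : mxsub f g A = rowsub f ((rowsub g A^T)^T) by apply/matrixP => i j; rewrite !mxE.
apply: leq_trans (mxrankS (rowsub_sub _ _)) _; rewrite mxrank_tr.
by apply: leq_trans (mxrankS (rowsub_sub _ _)) _; rewrite mxrank_tr.
Qed.

Lemma rank_of_inv (F : fieldType) r (A B : 'M[F]_r) : A *m B = 1%:M -> \rank A = r.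
Proof. by move=> /mulmx1_unit [] /mxrank_unit. Qed.

Lemma rank2 (F : fieldType) n (K : 'M[F]_(2, n)) (j c : 'I_n) :
  K 0 j * K 1 c - K 0 c * K 1 j != 0 -> (2 <= \rank K)%N.
Proof.
move=> hd.
pose g := fun s : 'I_2 => if s == 0 then j else c.
have h : \rank (mxsub id g K) = 2%N.
  apply: (@rank_of_inv _ _ _ ((K 0 j * K 1 c - K 0 c * K 1 j)^-1 *:
     \matrix_(s, t) (if s == 0 then (if t == 0 then K 1 c else - K 0 c)
                     else (if t == 0 then - K 1 j else K 0 j)))).
  apply/matrixP => s t; rewrite !mxE !big_ord_recl big_ord0 !mxE /g /=.
  have o2 (u : 'I_2) : u = 0 \/ u = 1.
    by case: u => [[|[|//]] hu]; [left|right]; apply: val_inj.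
  by case: (o2 s) => ->; case: (o2 t) => -> /=; field.
by apply: (@leq_trans (\rank (mxsub id g K))); [rewrite h | exact: rank_mxsub].
Qed.

Lemma rank_le_of_ker (F : fieldType) n (K : 'M[F]_(2, n)) (M : 'M[F]_n) :
  K *m M = 0 -> (2 <= \rank K)%N -> (\rank M <= n - 2)%N.
Proof.
move=> KM hK; have : (K <= kermx M)%MS by rewrite sub_kermx KM.
move/mxrankS; rewrite mxrank_ker => h.
have := rank_leq_row M; lia.
Qed.



Definition f0 {R : nzRingType} (k : nat) : R := if (k == 3)%N || (k == 6)%N then 1 else 0.

Definition Qn {R : nzRingType} (a : R) (i j : nat) : R :=
  match i, j with
  | 1%N, 4%N => - (a + 1) | 4%N, 1%N => a + 1 | 2%N, 5%N => - (a + 1) | 5%N, 2%N => a + 1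
  | 0%N, 3%N => - a | 0%N, 6%N => 1 | 3%N, 0%N => a | 3%N, 7%N => -1 | 6%N, 0%N => -1 | 6%N, 7%N => -1
  | 7%N, 3%N => 1 | 7%N, 6%N => 1
  | _, _ => 0
  end.



Lemma ord8 (i : 'I_8) (P : 'I_8 -> Prop) :
  P (o 0) -> P (o 1) -> P (o 2) -> P (o 3) -> P (o 4) -> P (o 5) -> P (o 6) -> P (o 7) -> P i.
Proof.
move=> p0 p1 p2 p3 p4 p5 p6 p7.
by case: i => [[|[|[|[|[|[|[|[|//]]]]]]]] hi];
  [move: p0|move: p1|move: p2|move: p3|move: p4|move: p5|move: p6|move: p7];
  congr P; apply: val_inj.
Qed.

Lemma part2 (R : fieldType) (a : R) : a + 1 != 0 -> \rank (Mx a f0) = 8%N.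
Proof.
move=> ha.
have H : Mx a f0 *m (\matrix_(i, j) Qn a i j) = (a + 1)%:M.
  apply/matrixP => i j; rewrite mxE sum8 !mxE !sum8.
  elim/ord8: i; elim/ord8: j; rewrite /= /gR /f0 /Qn /=; ring.
apply: (@rank_of_inv _ _ _ ((a + 1)^-1 *: \matrix_(i, j) Qn a i j)).
by rewrite -scalemxAr H scale_scalar_mx mulVf.
Qed.



Lemma ord6 (i : 'I_6) (P : 'I_6 -> Prop) :
  P (@Ordinal 6 0 isT) -> P (@Ordinal 6 1 isT) -> P (@Ordinal 6 2 isT) ->
  P (@Ordinal 6 3 isT) -> P (@Ordinal 6 4 isT) -> P (@Ordinal 6 5 isT) -> P i.
Proof.
move=> p0 p1 p2 p3 p4 p5.
by case: i => [[|[|[|[|[|[|//]]]]]] hi];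
  [move: p0|move: p1|move: p2|move: p3|move: p4|move: p5];
  congr P; apply: val_inj.
Qed.

Lemma ord2 (i : 'I_2) (P : 'I_2 -> Prop) : P 0 -> P 1 -> P i.
Proof.
move=> p0 p1; by case: i => [[|[|//]] hi]; [move: p0|move: p1]; congr P; apply: val_inj.
Qed.

Lemma part3_low (R : fieldType) : (6 <= \rank (Mx (-1 : R) f0))%N.
Proof.
pose w := fun i : 'I_6 => widen_ord (isT : (6 <= 8)%N) i.
pose S := mxsub w w (Mx (-1 : R) f0).
have h : \rank S = 6%N.
  apply: (@rank_of_inv _ _ _ (- S)).
  apply/matrixP => i j; rewrite mxE !big_ord_recl big_ord0 !mxE !sum8.
  elim/ord6: i; elim/ord6: j; rewrite /= /gR /f0 /=; ring.
by apply: (@leq_trans (\rank S)); [rewrite h | exact: rank_mxsub].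
Qed.

Definition vn {R : nzRingType} (xs : nat -> R) (r : nat) : R :=
  match r with 3%N => xs 6%N | 4%N => - xs 5%N | 5%N => - xs 4%N | 6%N => xs 3%N | _ => 0 end.
Definition wn {R : nzRingType} (xs : nat -> R) (r : nat) : R :=
  match r with
  | 0%N => xs 3%N * xs 6%N + xs 4%N * xs 5%N
  | 1%N => 2%:R * (xs 4%N * xs 6%N)
  | 2%N => - (2%:R * (xs 3%N * xs 5%N))
  | 3%N => xs 7%N * xs 6%N + xs 0%N * xs 6%N - 2%:R * xs 2%N * xs 5%N
  | 4%N => - (xs 7%N * xs 5%N) + xs 0%N * xs 5%N + 2%:R * xs 1%N * xs 6%N
  | 5%N => - (xs 7%N * xs 4%N) + xs 0%N * xs 4%N - 2%:R * xs 2%N * xs 3%N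
  | 6%N => xs 7%N * xs 3%N + xs 0%N * xs 3%N + 2%:R * xs 1%N * xs 4%N
  | 7%N => xs 3%N * xs 6%N - xs 4%N * xs 5%N
  | _ => 0
  end.

Definition Kvw {R : nzRingType} (xs : nat -> R) : 'M[R]_(2, 8) :=
  \matrix_(p, r) if (val p == 0)%N then vn xs r else wn xs r.
Definition Ke {R : nzRingType} (s : nat) : 'M[R]_(2, 8) :=
  \matrix_(p, r) if (val r == s + val p)%N then 1 else 0.

Lemma Kvw_ker (R : comNzRingType) (xs : nat -> R) : Kvw xs *m Mx (-1) xs = 0.
Proof.
apply/matrixP => p q; rewrite mxE sum8 !mxE !sum8.
elim/ord2: p; elim/ord8: q; rewrite /= /gR /vn /wn /=; ring.
Qed.

Lemma Ke3_ker (R : comNzRingType) (xs : nat -> R) : xs 3%N = 0 -> xs 4%N = 0 -> Ke 3 *m Mx (-1) xs = 0.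
Proof.
move=> h3 h4; apply/matrixP => p q; rewrite mxE sum8 !mxE !sum8.
elim/ord2: p; elim/ord8: q; rewrite /= /gR /= ?h3 ?h4; ring.
Qed.

Lemma Ke5_ker (R : comNzRingType) (xs : nat -> R) : xs 5%N = 0 -> xs 6%N = 0 -> Ke 5 *m Mx (-1) xs = 0.
Proof.
move=> h3 h4; apply/matrixP => p q; rewrite mxE sum8 !mxE !sum8.
elim/ord2: p; elim/ord8: q; rewrite /= /gR /= ?h3 ?h4; ring.
Qed.



Lemma kb (R : fieldType) (K : 'M[R]_(2, 8)) (M : 'M[R]_8) :
  K *m M = 0 -> (2 <= \rank K)%N -> (\rank M <= 6)%N.
Proof. by move=> h1 h2; have := @rank_le_of_ker _ _ K M h1 h2. Qed.

Lemma part3_up (R : numFieldType) (xs : nat -> R) : (\rank (Mx (-1) xs) <= 6)%N.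
Proof.
have two : (2%:R : R) != 0 by rewrite pnatr_eq0.
have [h3|h3] := eqVneq (xs 3%N) 0; have [h4|h4] := eqVneq (xs 4%N) 0.
- apply: (@kb _ _ _ (Ke3_ker _ _ h3 h4)).
  by apply: (@rank2 _ _ _ (o 3) (o 4)); rewrite !mxE /= mul0r subr0 mulr1 oner_neq0.
all: have [h5|h5] := eqVneq (xs 5%N) 0; have [h6|h6] := eqVneq (xs 6%N) 0;
  try (apply: (@kb _ _ _ (Ke5_ker _ _ h5 h6));
    by apply: (@rank2 _ _ _ (o 5) (o 6)); rewrite !mxE /= mul0r subr0 mulr1 oner_neq0).
all: apply: (@kb _ _ _ (Kvw_ker _ xs)).
- (* xs3 = 0, xs4 <> 0, xs6 <> 0 *)
  apply: (@rank2 _ _ _ (o 5) (o 1)); rewrite !mxE /= mul0r subr0.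
  by rewrite mulf_neq0 ?oppr_eq0 ?mulf_neq0.
- (* xs3 = 0, xs4 <> 0, xs5 <> 0 *)
  apply: (@rank2 _ _ _ (o 5) (o 0)); rewrite !mxE /= mul0r subr0 h3 mul0r add0r.
  by rewrite mulf_neq0 ?oppr_eq0 ?mulf_neq0.
- apply: (@rank2 _ _ _ (o 5) (o 0)); rewrite !mxE /= mul0r subr0 h3 mul0r add0r.
  by rewrite mulf_neq0 ?oppr_eq0 ?mulf_neq0.
all: have [hw|hw] := eqVneq (xs 3%N * xs 6%N + xs 4%N * xs 5%N) 0;
  last by apply: (@rank2 _ _ _ (o 6) (o 0)); rewrite !mxE /= mul0r subr0 mulf_neq0.
all: first [
  by apply: (@rank2 _ _ _ (o 6) (o 7)); rewrite !mxE /= mul0r subr0;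
    rewrite (_ : _ - _ = 2%:R * (xs 3%N * xs 6%N) - (xs 3%N * xs 6%N + xs 4%N * xs 5%N)); [
    rewrite hw subr0 !mulf_neq0 | ring]
 | by apply: (@rank2 _ _ _ (o 6) (o 2)); rewrite !mxE /= mul0r subr0;
    rewrite mulf_neq0 ?oppr_eq0 ?mulf_neq0 ].
Qed.


Theorem proposition2 (R : realType) :
  (forall alpha : R, -1 < alpha <= 1 ->
     is_linear_deformation (gC alpha) (gC (-1))) /\
  (forall alpha : R, -1 < alpha <= 1 -> num_invariants (gC alpha) 0) /\
  num_invariants (gC (-1 : R)) 2.
Proof.
have hx : forall k : 'I_8, (\row_(k < 8) (f0 k : R)) 0 k = f0 k by move=> k; rewrite mxE.
split; [|split].
- move=> alpha _.
  exists (fun i j k => gC 1 i j k - gC 0 i j k), (-1 - alpha); split; [|split].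
  + apply: skew_of => i j k; rewrite (gC_skew _ 1 i j k) (gC_skew _ 0 i j k); ring.
  + move=> t; apply: (gC_Lie _ (alpha + t)) => i j k; rewrite /deform !gC_lin; ring.
  + by move=> i j k; rewrite /deform !gC_lin; ring.
- move=> alpha /andP[ha _]; split => //; split.
  + exists (\row_(k < 8) f0 k); rewrite (coadjE _ _ _ _ hx) part2 //.
    by apply/eqP => h; lra.
  + by move=> x; exact: rank_leq_row.
- split => //; split.
  + exists (\row_(k < 8) f0 k); rewrite (coadjE _ _ _ _ hx); apply/eqP; rewrite eqn_leq.
    by rewrite part3_up part3_low.
  + move=> x; rewrite (coadjE _ _ x (fun k => x 0 (inord k))) ?part3_up //.
    by move=> k; rewrite inord_val.
Qed.
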